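(* Let $\mathbf{W}=\langle W;\to,\neg,{}^{+},{}^{-},1\rangle$ be a quasi-Wajsberg* algebra. For $x,y\in W$ define $0:=x\to x$, $x\oplus y:=\neg x\to y$ and $-x:=\neg x$. Then $g(\mathbf{W})=\langle W;\oplus,-,{}^{+},{}^{-},0,1\rangle$ (with ${}^+,{}^-,1$ those of $\mathbf{W}$) is a quasi-MV* algebra, where in $g(\mathbf{W})$ the join is $x\vee y=(x^{+}\oplus(-x^{+}\oplus y^{+})^{+})\oplus(x^{-}\oplus(-x^{-}\oplus y^{-})^{+})$.
   Context: A quasi-Wajsberg* algebra is an algebra $\langle W;\to,\neg,{}^{+},{}^{-},1\rangle$ of type $\langle2,1,1,1,0\rangle$ such that for all $x,y,z\in W$: (QW*1) $x\to y=\neg y\to\neg x$; (QW*2) $(x\to 1)\to((y\to 1)\to z)=(y\to 1)\to((x\to 1)\to z)$; (QW*3) $(1\to x)\to 1=1$; (QW*4) $(z\to z)\to(x\to y)=x\to y$; (QW*5) $(1\to 1)\to x^{+}=((1\to 1)\to x)^{+}=(x\to 1)\to 1$ and $(1\to 1)\to x^{-}=((1\to 1)\to x)^{-}=(x\to\neg 1)\to\neg 1$; (QW*6) $x\to y=(y^{+}\to x^{-})\to(x^{+}\to y^{-})$; (QW*7) $\neg(x\to y)=y\to x$; (QW*8) $\neg\neg x=x$; (QW*9) $(x\to(\neg x\to y))^{+}=x^{+}\to(\neg x^{+}\to y^{+})$; (QW*10) $x\vee y=y\vee x$; (QW*11) $x\vee(y\vee z)=(x\vee y)\vee z$; (QW*12)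 $x\to(y\vee z)=(x\to y)\vee(x\to z)$; where $x\vee y:=((x^{+}\to y^{+})^{+}\to(\neg x)^{-})\to((y^{-}\to x^{-})^{-}\to x^{-})$. Conventions: ${}^+,{}^-$ bind tighter than $\neg$, which binds tighter than $\to$. (In such an algebra $x\to x=y\to y$ for all $x,y$, so $0$ is well defined.) A quasi-MV* algebra is an algebra $\langle A;\oplus,-,{}^{+},{}^{-},0,1\rangle$ of type $\langle2,1,1,1,0,0\rangle$ such that for all $x,y,z\in A$: (QMV*1) $x\oplus y=y\oplus x$; (QMV*2) $(1\oplus x)\oplus(y\oplus(1\oplus z))=((1\oplus x)\oplus y)\oplus(1\oplus z)$; (QMV*3) $(x\oplus 1)\oplus 1=1$; (QMV*4) $(x\oplus y)\oplus 0=x\oplus y$; (QMV*5) $x^{+}\oplus 0=(x\oplus 0)^{+}=1\oplus(-1\oplus x)$ and $x^{-}\oplus 0=(x\oplus 0)^{-}=-1\oplus(1\oplus x)$; (QMV*6) $x\oplus y=(x^{+}\oplus y^{+})\oplus(x^{-}\oplus y^{-})$; (QMV*7) $0=-0$; (QMV*8) $x\oplus(-x)=0$; (QMV*9) $-(x\oplus y)=-x\oplus(-y)$; (QMV*10) $-(-x)=x$; (QMV*11) $(-x\oplus(x\oplus y))^{+}=-x^{+}\oplus(x^{+}\oplus y^{+})$; (QMV*12) $x\vee y=y\vee x$; (QMV*13) $x\vee(y\vee z)=(x\vee y)\vee z$; (QMV*14) $x\oplus(y\vee z)=(x\oplus y)\vee(x\oplus z)$; where $x\vee y:=(x^{+}\oplus(-x^{+}\oplus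 y^{+})^{+})\oplus(x^{-}\oplus(-x^{-}\oplus y^{-})^{+})$, and ${}^+,{}^-$ bind tighter than $-$. *)

(* Defs.v *)
Section QW.
Variables (W : Type) (imp : W -> W -> W) (neg : W -> W)
          (pl mi : W -> W) (one : W).

Definition qw_join (x y : W) : W :=
  imp (imp (pl (imp (pl x) (pl y))) (mi (neg x)))
      (imp (mi (imp (mi y) (mi x))) (mi x)).

Record is_quasi_Wajsberg_star : Prop := {
  QW1 : forall x y, imp x y = imp (neg y) (neg x);
  QW2 : forall x y z, imp (imp x one) (imp (imp y one) z)
                    = imp (imp y one) (imp (imp x one) z);
  QW3 : forall x, imp (imp one x) one = one;
  QW4 : forall x y z, imp (imp z z) (imp x y) = imp x y;
  QW5a : forall x, imp (imp one one) (pl x) = pl (imp (imp one one) x);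
  QW5b : forall x, pl (imp (imp one one) x) = imp (imp x one) one;
  QW5c : forall x, imp (imp one one) (mi x) = mi (imp (imp one one) x);
  QW5d : forall x, mi (imp (imp one one) x) = imp (imp x (neg one)) (neg one);
  QW6 : forall x y, imp x y = imp (imp (pl y) (mi x)) (imp (pl x) (mi y));
  QW7 : forall x y, neg (imp x y) = imp y x;
  QW8 : forall x, neg (neg x) = x;
  QW9 : forall x y, pl (imp x (imp (neg x) y))
                  = imp (pl x) (imp (neg (pl x)) (pl y));
  QW10 : forall x y, qw_join x y = qw_join y x;
  QW11 : forall x y z, qw_join x (qw_join y z) = qw_join (qw_join x y) z;
  QW12 : forall x y z, imp x (qw_join y z) = qw_join (imp x y) (imp x z)
}.
End QW.

Section QMV.
Variables (A : Type) (oplus : A -> A -> A) (opp : A -> A)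
          (pl mi : A -> A) (zero one : A).

Definition qmv_join (x y : A) : A :=
  oplus (oplus (pl x) (pl (oplus (opp (pl x)) (pl y))))
        (oplus (mi x) (pl (oplus (opp (mi x)) (mi y)))).

Record is_quasi_MV_star : Prop := {
  QMV1 : forall x y, oplus x y = oplus y x;
  QMV2 : forall x y z, oplus (oplus one x) (oplus y (oplus one z))
                     = oplus (oplus (oplus one x) y) (oplus one z);
  QMV3 : forall x, oplus (oplus x one) one = one;
  QMV4 : forall x y, oplus (oplus x y) zero = oplus x y;
  QMV5a : forall x, oplus (pl x) zero = pl (oplus x zero);
  QMV5b : forall x, pl (oplus x zero) = oplus one (oplus (opp one) x);
  QMV5c : forall x, oplus (mi x) zero = mi (oplus x zero);
  QMV5d : forall x, mi (oplus x zero) = oplus (opp one) (oplus one x);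
  QMV6 : forall x y, oplus x y = oplus (oplus (pl x) (pl y)) (oplus (mi x) (mi y));
  QMV7 : zero = opp zero;
  QMV8 : forall x, oplus x (opp x) = zero;
  QMV9 : forall x y, opp (oplus x y) = oplus (opp x) (opp y);
  QMV10 : forall x, opp (opp x) = x;
  QMV11 : forall x y, pl (oplus (opp x) (oplus x y))
                    = oplus (opp (pl x)) (oplus (pl x) (pl y));
  QMV12 : forall x y, qmv_join x y = qmv_join y x;
  QMV13 : forall x y z, qmv_join x (qmv_join y z) = qmv_join (qmv_join x y) z;
  QMV14 : forall x y z, oplus x (qmv_join y z) = qmv_join (oplus x y) (oplus x z)
}.
End QMV.

Definition g_oplus {W : Type} (imp : W -> W -> W) (neg : W -> W) (x y : W) : W :=
  imp (neg x) y.
(* 0 := x -> x; any x gives the same value in a quasi-Wajsberg* algebra; we take x := 1 *)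
Definition g_zero {W : Type} (imp : W -> W -> W) (one : W) : W := imp one one.

(* Main.v *)
Require Import Defs.
From Stdlib Require Import Setoid.

Theorem proposition3p7 (W : Type) (imp : W -> W -> W) (neg : W -> W)
    (pl mi : W -> W) (one : W) :
  is_quasi_Wajsberg_star W imp neg pl mi one ->
  is_quasi_MV_star W (g_oplus imp neg) neg pl mi (g_zero imp one) one.
Proof.
  intros H. destruct H as [Q1 Q2 Q3 Q4 Q5a Q5b Q5c Q5d Q6 Q7 Q8 Q9 Q10 Q11 Q12].
  assert (A : forall u w, neg (imp w w) = imp u u).
  { intros u w. transitivity (neg (imp (imp u u) (imp w w))).
    rewrite Q4; reflexivity. rewrite Q7. apply Q4. }
  assert (E0 : forall w, imp w w = imp one one).
  { intro w. rewrite <- (A w w). apply A. }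
  assert (N0 : neg (imp one one) = imp one one) by apply A.
  assert (negz : forall a, neg (imp (imp one one) a) = imp (imp one one) (neg a)).
  { intro a. rewrite Q7, Q1, N0. reflexivity. }
  assert (pl0 : pl (imp one one) = imp one one).
  { rewrite <- (E0 (imp one one)) at 1. rewrite Q5b, Q3. reflexivity. }
  assert (mi0 : mi (imp one one) = imp one one).
  { rewrite <- (E0 (imp one one)) at 1. rewrite Q5d.
    rewrite <- negz, Q3. apply E0. }
  assert (N1 : forall a, imp (imp one one) (mi (neg a)) = imp (imp one one) (neg (pl a))).
  { intro a. transitivity (imp (imp one a) (neg one)).
    - rewrite Q5c, Q5d, <- (Q1 one a). reflexivity.
    - rewrite <- negz, Q5a, Q5b, Q7, (Q1 one (imp a one)), Q7. reflexivity. }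
  assert (N2 : forall a, imp (imp one one) (pl (neg a)) = imp (imp one one) (neg (mi a))).
  { intro a. transitivity (imp (imp (neg one) a) one).
    - rewrite Q5a, Q5b, (Q1 (neg one) a), Q8. reflexivity.
    - rewrite <- negz, Q5c, Q5d, Q7, (Q1 (neg one) (imp a (neg one))), Q7, Q8. reflexivity. }
  assert (JD : forall w, qw_join W imp neg pl mi w w = imp (imp one one) w).
  { intro w. unfold qw_join. rewrite (E0 (pl w)), (E0 (mi w)), pl0, mi0, N1.
    rewrite (Q6 (imp one one) w), pl0, mi0, (Q1 (pl w)), N0. reflexivity. }
  assert (R : forall x y, imp x (imp (imp one one) y) = imp x y).
  { intros x y. rewrite <- JD, Q12, JD, Q4. reflexivity. }
  assert (L : forall a b, imp (imp (imp one one) a) b = imp a b).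
  { intros a b. rewrite (Q1 (imp (imp one one) a) b), negz, R, <- Q1. reflexivity. }
  assert (J : forall x y, qmv_join W (g_oplus imp neg) neg pl mi x y = qw_join W imp neg pl mi x y).
  { intros x y. unfold qmv_join, qw_join, g_oplus. rewrite !Q8, !Q7. f_equal.
    - rewrite <- (R _ (neg (pl x))), <- N1, R. reflexivity.
    - rewrite (Q1 (mi (imp (mi y) (mi x))) (mi x)).
      rewrite <- (R _ (neg (mi (imp (mi y) (mi x))))), <- N2, R, Q7. reflexivity. }
  assert (C : forall x y, g_oplus imp neg x y = g_oplus imp neg y x).
  { intros x y. unfold g_oplus. rewrite Q1, Q8. reflexivity. }
  assert (ND : forall x y, neg (g_oplus imp neg x y) = g_oplus imp neg (neg x) (neg y)).
  { intros x y. unfold g_oplus. rewrite Q7, Q8, (Q1 x (neg y)), Q8. reflexivity. }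
  assert (Q2' : forall x y z, g_oplus imp neg (g_oplus imp neg x (neg one)) (g_oplus imp neg (g_oplus imp neg y (neg one)) z)
     = g_oplus imp neg (g_oplus imp neg y (neg one)) (g_oplus imp neg (g_oplus imp neg x (neg one)) z)).
  { intros x y z. unfold g_oplus. rewrite !Q7, <- (Q1 x one), <- (Q1 y one). apply Q2. }
  assert (S : forall p q w, g_oplus imp neg (g_oplus imp neg one p) (g_oplus imp neg (g_oplus imp neg one q) w)
     = g_oplus imp neg (g_oplus imp neg one q) (g_oplus imp neg (g_oplus imp neg one p) w)).
  { intros p q w. pose proof (f_equal neg (Q2' (neg p) (neg q) (neg w))) as H.
    rewrite !ND, !Q8 in H. rewrite (C one p), (C one q). exact H. }
  constructor.
  - exact C.
  - intros x y z. rewrite (C (g_oplus imp neg (g_oplus imp neg one x) y)), S, (C y). reflexivity.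
  - intros x. unfold g_oplus. rewrite Q7. apply Q3.
  - intros x y. rewrite C. unfold g_oplus, g_zero. rewrite N0, Q4. reflexivity.
  - intros x. rewrite !(C _ (g_zero imp one)). unfold g_oplus, g_zero. rewrite N0. apply Q5a.
  - intros x. rewrite !(C _ (g_zero imp one)). unfold g_oplus, g_zero. rewrite N0, Q5b, Q8.
    rewrite (Q1 (neg one)), Q7, Q8. reflexivity.
  - intros x. rewrite !(C _ (g_zero imp one)). unfold g_oplus, g_zero. rewrite N0. apply Q5c.
  - intros x. rewrite !(C _ (g_zero imp one)). unfold g_oplus, g_zero. rewrite N0, Q5d, Q8.
    rewrite (Q1 one (imp (neg one) x)), Q7. reflexivity.
  - intros x y. unfold g_oplus. rewrite (Q6 (neg x) y), Q7. f_equal.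
    + rewrite <- (R _ (mi (neg x))), N1, R. reflexivity.
    + rewrite <- (L (pl (neg x))), N2, L. reflexivity.
  - unfold g_zero. symmetry. exact N0.
  - intros x. unfold g_oplus, g_zero. apply E0.
  - exact ND.
  - exact Q8.
  - intros x y. unfold g_oplus. rewrite !Q8. apply Q9.
  - intros x y. rewrite !J. apply Q10.
  - intros x y z. rewrite !J. apply Q11.
  - intros x y z. rewrite !J. unfold g_oplus at 1 2 3. apply Q12.
Qed.
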